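(* For every $Q\subset\mathrm{EX}(M)$, the space $Q(M)$ is $T_1$.
   Context: Conventions: $M$ is an $n$-dimensional smooth manifold (Hausdorff, second countable) with maximal $C^\infty$ atlas $\mathcal{A}(M)$; every chart $\alpha$ has open domain $\mathrm{dom}(\alpha)\subset M$ and open range $\mathrm{ran}(\alpha)\subset\mathbb{R}^n$. For $A\subset\mathbb{R}^n$, $\partial A$ is its boundary in $\mathbb{R}^n$; for $A\subset U\subset\mathbb{R}^n$, $\partial_U A$ is the boundary of $A$ relative to $U$. An admissible boundary point of $\alpha$ is a $p\in\partial\,\mathrm{ran}(\alpha)$ such that every sequence $(x_i)\subset\mathrm{dom}(\alpha)$ with $\alpha(x_i)\to p$ has no accumulation point in $M$; $B(\alpha)$ is the set of these. An extension is a pair $(\alpha,U)$, $U\subset\mathbb{R}^n$ open, $\mathrm{ran}(\alpha)\subset U$, $\emptyset\ne\partial_U\mathrm{ran}(\alpha)\subset B(\alpha)$; $\mathrm{EX}(M)$ is the set of extensions. A boundary set is $(\alpha,U,V)$ with $(\alpha,U)\in\mathrm{EX}(M)$, $V\subset B(\alpha)\cap U$ (a boundary point if $V=\{p\}$). $(\alpha,U,V)$ covers $(\beta,X,Y)$ if for every sequence $(y_i)\subset\mathrm{dom}(\beta)$ with $(\beta(y_i))$ having an accumulation point in $Y$ there is a subsequence $(v_i)\subset\mathrm{dom}(\alpha)$ of $(y_i)$ with $(\alpha(v_i))$ having an accumulation point in $V$; they are equivalent, $\equiv$, if each covers the other. Completion: for $Q\subset\mathrm{EX}(M)$ let $P=\{(\alpha,\mathrm{ran}(\alpha)):\alpha\in\mathcal{A}(M)\}$,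 $S_Q=P\cup Q$, $N_{(\alpha,U)}=\mathrm{ran}(\alpha)\cup\partial_U\mathrm{ran}(\alpha)$ with subspace topology of $\mathbb{R}^n$, $N_Q=\bigsqcup_{(\alpha,U)\in S_Q}N_{(\alpha,U)}$ with disjoint-union topology. Identify $x\in N_{(\alpha,U)}$ with $y\in N_{(\beta,X)}$ iff either $x\in\mathrm{ran}(\alpha)$, $y\in\mathrm{ran}(\beta)$, $\beta\circ\alpha^{-1}(x)=y$, or $x\in\partial_U\mathrm{ran}(\alpha)$, $y\in\partial_X\mathrm{ran}(\beta)$, $(\alpha,U,\{x\})\equiv(\beta,X,\{y\})$. $Q(M)$ is the quotient space with the quotient topology and $q:N_Q\to Q(M)$ the quotient map. *)

(* Defs.v *)
From HB Require Import structures.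
From mathcomp Require Import all_boot all_order all_algebra.
From mathcomp Require Import all_classical all_reals all_analysis.
Set Implicit Arguments. Unset Strict Implicit. Unset Printing Implicit Defensive.
Import Order.TTheory GRing.Theory Num.Theory.
Import numFieldNormedType.Exports.
Local Open Scope classical_set_scope.
Local Open Scope ring_scope.

Section Manifold.
Variables (R : realType) (n : nat) (M : topologicalType).
Notation Rn := 'rV[R]_n.

Definition sec_countable (T : topologicalType) : Prop :=
  exists B : set (set T), countable B /\ (forall b, B b -> open b) /\
    forall O, open O -> forall x, O x -> exists b, [/\ B b, b x & (b `<=` O)].

Record chart := Chart {
  cdom : set M; cran : set Rn; cphi : M -> Rn; cpsi : Rn -> M }.

Definition is_chart (a : chart) : Prop :=
  open (cdom a) /\ open (cran a) /\ (cphi a @` cdom a = cran a) /\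
  (forall x, cdom a x -> cpsi a (cphi a x) = x) /\
  (forall y, cran a y -> cdom a (cpsi a y) /\ cphi a (cpsi a y) = y) /\
  {within cdom a, continuous cphi a} /\ {within cran a, continuous cpsi a}.

Definition iterD (vs : seq Rn) (f : Rn -> Rn) : Rn -> Rn :=
  foldr (fun v g => fun x => 'D_v g x) f vs.

Definition smooth_on (U : set Rn) (f : Rn -> Rn) : Prop :=
  forall vs : seq Rn,
    (forall x v, U x -> derivable (iterD vs f) x v) /\
    {within U, continuous (iterD vs f)}.

Definition compat (a b : chart) : Prop :=
  smooth_on (cphi a @` (cdom a `&` cdom b)) (cphi b \o cpsi a).

Definition maximal_smooth_atlas (A : set chart) : Prop :=
  [/\ (forall a, A a -> is_chart a),
      (forall x, exists2 a, A a & cdom a x),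
      (forall a b, A a -> A b -> compat a b) &
      (forall c, is_chart c -> (forall a, A a -> compat a c /\ compat c a) -> A c)].

Definition bd (S : set Rn) : set Rn := closure S `\` interior S.
Definition rbd (U S : set Rn) : set Rn :=
  [set p | [/\ U p, closure S p &
     ~ (exists O, [/\ open O, O p & (O `&` U `<=` S)])]].

Definition acc_pt (T : topologicalType) (u : nat -> T) (p : T) : Prop :=
  forall O, nbhs p O -> forall N, exists i, (N <= i)%N /\ O (u i).

Definition B_adm (a : chart) : set Rn :=
  [set p | bd (cran a) p /\
     forall x : nat -> M, (forall i, cdom a (x i)) ->
       (cphi a \o x) @ \oo --> p -> forall z : M, ~ acc_pt x z].

Definition ext := (chart * set Rn)%type.

Definition EX (A : set chart) : set ext :=
  [set e | [/\ A e.1, open e.2, cran e.1 `<=` e.2,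
     (rbd e.2 (cran e.1) !=set0) & (rbd e.2 (cran e.1) `<=` B_adm e.1)]].

Definition covers (a : chart) (U V : set Rn) (b : chart) (X Y : set Rn) : Prop :=
  forall y : nat -> M, (forall i, cdom b (y i)) ->
    (exists2 p, Y p & acc_pt (cphi b \o y) p) ->
    exists s : nat -> nat, (forall i, (s i < s i.+1)%N) /\
      (forall i, cdom a (y (s i))) /\
      exists2 p, V p & acc_pt (cphi a \o (y \o s)) p.

Definition bequiv (a : chart) (U V : set Rn) (b : chart) (X Y : set Rn) : Prop :=
  covers a U V b X Y /\ covers b X Y a U V.

Definition SQ (A : set chart) (Q : set ext) : set ext :=
  [set e | (A e.1 /\ e.2 = cran e.1)] `|` Q.

Definition Nset (e : ext) : set Rn := cran e.1 `|` rbd e.2 (cran e.1).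

(** N_Q as a set of pairs (index, point) *)
Definition NQ (A : set chart) (Q : set ext) : set (ext * Rn) :=
  [set p | SQ A Q p.1 /\ Nset p.1 p.2].

Definition NQ_open (A : set chart) (Q : set ext) (W : set (ext * Rn)) : Prop :=
  W `<=` NQ A Q /\
  forall e, SQ A Q e -> exists O : set Rn,
    open O /\ [set x | Nset e x /\ W (e, x)] = Nset e `&` O.

Definition ident (p q : ext * Rn) : Prop :=
  let: ((a, U), x) := p in let: ((b, X), y) := q in
  [/\ cran a x, cran b y, cdom b (cpsi a x) & cphi b (cpsi a x) = y] \/
  [/\ rbd U (cran a) x, rbd X (cran b) y &
      bequiv a U [set x] b X [set y]].

Definition qclass (A : set chart) (Q : set ext) (p : ext * Rn) : set (ext * Rn) :=
  [set q | NQ A Q q /\ ident p q].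

Definition QM (A : set chart) (Q : set ext) : set (set (ext * Rn)) :=
  [set C | exists2 p, NQ A Q p & C = qclass A Q p].

Definition QM_open (A : set chart) (Q : set ext) (W : set (set (ext * Rn))) : Prop :=
  W `<=` QM A Q /\
  NQ_open A Q [set p | NQ A Q p /\ W (qclass A Q p)].

Definition QM_T1 (A : set chart) (Q : set ext) : Prop :=
  forall C, QM A Q C -> QM_open A Q [set D | QM A Q D /\ D <> C].


End Manifold.
Arguments sec_countable : clear implicits.

(* Main.v *)
Require Import Defs.
From HB Require Import structures.
From mathcomp Require Import all_boot all_order all_algebra.
From mathcomp Require Import all_classical all_reals all_analysis.
Local Open Scope classical_set_scope.
Import Order.TTheory GRing.Theory Num.Theory.
Import numFieldNormedType.Exports.

Lemma covers_pt_eq (R : realType) (n : nat) (M : topologicalType)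
  (a : chart R n M) (U : set 'rV[R]_n) (x1 x2 : 'rV[R]_n) :
  is_chart a -> closure (cran a) x1 ->
  covers a U [set x2] a U [set x1] -> x1 = x2.
Proof.
move=> [_ [_ [_ [_ [Hpsi _]]]]] Hcl Hcov.
apply: (@norm_hausdorff _ 'rV[R]_n) => P B HP HB.
have [z Hz] : exists z : nat -> 'rV[R]_n, forall i,
    cran a (z i) /\ (P `&` ball x1 (i.+1%:R^-1)%R) (z i).
  suff /choice [f Hf] : forall i : nat, exists w, cran a w /\ (P `&` ball x1 (i.+1%:R^-1)%R) w
    by exists f.
  move=> i.
  have : nbhs x1 (P `&` ball x1 (i.+1%:R^-1)%R).
    by apply: filterI => //; apply: nbhsx_ballx; rewrite invr_gt0 ltr0n.
  by move/Hcl => [w [Hw1 Hw2]]; exists w.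
have Hphi : forall i, cphi a (cpsi a (z i)) = z i by move=> i; case: (Hpsi _ (Hz i).1).
have Hd : forall i, cdom a ((cpsi a \o z) i).
  by move=> i; case: (Hpsi _ (Hz i).1).
have Hex : exists2 p, [set x1] p & acc_pt (cphi a \o (cpsi a \o z)) p.
  exists x1; first by [].
  move=> O /nbhs_ballP [eps e0 Heps] N.
  have := near_infty_natSinv_lt (PosNum e0). case=> N0 /= _ HN0.
  exists (maxn N N0); split; first exact: leq_maxl.
  rewrite Hphi; apply: Heps.
  apply: (le_ball (e1 := ((maxn N N0).+1%:R^-1)%R)); last by case: (Hz (maxn N N0)) => _ [].
  by apply/ltW/HN0/leq_maxr.
have [s [_ [_ [p Hp Hacc]]]] := Hcov _ Hd Hex.
rewrite /= in Hp; subst p.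
have [i [_ Hi]] := Hacc B HB 0%N.
rewrite /= Hphi in Hi.
by exists (z (s i)); split => //; case: (Hz (s i)) => _ [].
Qed.

Lemma ident_refl (R : realType) (n : nat) (M : topologicalType)
  (a : chart R n M) (U : set 'rV[R]_n) (x : 'rV[R]_n) :
  is_chart a -> Nset (a, U) x -> ident ((a, U), x) ((a, U), x).
Proof.
move=> [_ [_ [_ [_ [Hpsi _]]]]] [Hx|Hx].
- by left; case: (Hpsi _ Hx) => H1 H2; split.
- right; split => //; split; move=> y Hy [p Hp Hacc];
  by exists id; split => //; split => //; exists p.
Qed.

Theorem mainTheorem14 (R : realType) (n : nat) (M : topologicalType)
  (A : set (chart R n M)) :
  hausdorff_space M -> sec_countable M -> maximal_smooth_atlas A ->
  forall Q : set (ext R n M), Q `<=` EX A -> QM_T1 A Q.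
Proof.
move=> _ _ [Hch _ _ _] Q HQ C HC.
split; first by move=> D [].
split; first by move=> p [].
move=> e He.
have Hae : A e.1 by case: He => [[]|/HQ []].
have Hce := Hch _ Hae.
have Hsub : forall x y, (Nset e x /\ qclass A Q (e, x) = C) ->
    (Nset e y /\ qclass A Q (e, y) = C) -> x = y.
  move=> x y [Nx Cx] [Ny Cy].
  have Hx : qclass A Q (e, x) (e, x).
    by split; [split | case: e He Hae Hce Nx Cx Ny Cy => [a U] /= *; apply: ident_refl].
  rewrite Cx -Cy in Hx; case: Hx => _.
  case: e He Hae Hce Nx Cx Ny Cy => [a U] /= _ _ Hce _ _ _ _.
  case => [[Hy _ _ <-]|[_ Hrx [Hcov _]]].
  - by case: Hce => [_ [_ [_ [_ [Hpsi _]]]]]; case: (Hpsi _ Hy).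
  - by case: Hrx => _ Hcl _; exact: (@covers_pt_eq _ _ _ a U x y Hce Hcl Hcov).
set S := [set x | Nset e x /\ qclass A Q (e, x) = C].
exists (~` S); split.
- rewrite openC => p Hp.
  have [y [Sy _]] := Hp setT filterT.
  suff -> : p = y by [].
  apply: (@norm_hausdorff _ 'rV[R]_n) => P B HP HB.
  have [w [Sw Pw]] := Hp P HP.
  exists y; split; last exact: nbhs_singleton HB.
  by rewrite -(Hsub _ _ Sw Sy).
- apply/seteqP; split => x /=.
  + by move=> [Nx [_ [_ Hne]]]; split => // -[_ Heq]; exact: Hne Heq.
  + move=> [Nx HnS]; split => //; split; first by split.
    split; first by exists (e, x).
    by move=> Heq; apply: HnS; split.
Qed.
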